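(* Assume (MA1) holds and let $\{x_k\}$ be generated by Algorithm R2N. Suppose the algorithm generates infinitely many successful iterations, that there is $(f+h)_{\rm low}\in\mathbb{R}$ with $(f+h)(x_k)\ge(f+h)_{\rm low}$ for all $k$, and that there is $\alpha>0$ with $\nu_k^{-1/2}\xi_{cp}(x_k,\nu_k^{-1})^{1/2}\ge\alpha$ for all $k\in\mathbb{N}$. Then $\{x_k\}$ is a Cauchy sequence and hence converges.
   Context: Setting: $f:\mathbb{R}^n\to\mathbb{R}$ continuously differentiable, $h:\mathbb{R}^n\to\mathbb{R}\cup\{+\infty\}$ proper lower semicontinuous; $\partial$ = limiting subdifferential; $\|\cdot\|$ Euclidean norm on vectors, spectral norm on matrices. A function $g$ is prox-bounded if there exist $\nu>0$, $x$ with $\inf_y g(y)+\frac1{2\nu}\|y-x\|^2>-\infty$; its threshold is the supremum of such $\nu$. For each $x$, $B(x)$ is symmetric and $\psi(\cdot;x):\mathbb{R}^n\to\mathbb{R}\cup\{+\infty\}$. $\varphi(s;x)=f(x)+\nabla f(x)^Ts+\tfrac12s^TB(x)s$, $m(s;x,\sigma)=\varphi(s;x)+\tfrac12\sigma\|s\|^2+\psi(s;x)$; $\varphi_{cp}(s;x)=f(x)+\nabla f(x)^Ts$, $m_{cp}(s;x,\nu^{-1})=\varphi_{cp}(s;x)+\tfrac12\nu^{-1}\|s\|^2+\psi(s;x)$, $P_{cp}(x,\nu^{-1})=\operatorname{argmin}_s m_{cp}(s;x,\nu^{-1})$, and for $s_{cp}\in P_{cp}(x,\nu^{-1})$, $\xi_{cp}(x,\nu^{-1})=f(x)+h(x)-(\varphi_{cp}(s_{cp};x)+\psi(s_{cp};x))$.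 (MA1): for every $x$, $\psi(\cdot;x)$ is proper, lsc, prox-bounded with threshold $\lambda_x$, $\psi(0;x)=h(x)$, $\partial\psi(0;x)=\partial h(x)$. Algorithm R2N: constants $0<\theta_1<1<\theta_2$, $0<\eta_1\le\eta_2<1$, $0<\gamma_3\le1<\gamma_1\le\gamma_2$; $x_0$ with $h(x_0)<\infty$, $\sigma_0>0$. For $k=0,1,\dots$: choose symmetric $B_k=B(x_k)$; set $\nu_k=\theta_1/(\|B_k\|+\sigma_k)$; compute $s_{k,cp}\in P_{cp}(x_k,\nu_k^{-1})$ and $\xi_{cp}(x_k,\nu_k^{-1})$ (using $s_{k,cp}$); compute $s_k$ with $m(s_k;x_k,\sigma_k)\le m(s_{k,cp};x_k,\sigma_k)$; if $\|s_k\|>\theta_2\|s_{k,cp}\|$, reset $s_k=s_{k,cp}$; compute $\rho_k=\frac{(f+h)(x_k)-(f+h)(x_k+s_k)}{\varphi(0;x_k)+\psi(0;x_k)-\varphi(s_k;x_k)-\psi(s_k;x_k)}$ (extended arithmetic: $\pm\infty\cdot0=0$, $(\pm\infty)/(\pm\infty)=0$); if $\rho_k\ge\eta_1$ set $x_{k+1}=x_k+s_k$, else $x_{k+1}=x_k$; choose $\sigma_{k+1}\in[\gamma_3\sigma_k,\sigma_k]$ if $\rho_k\ge\eta_2$ (very successful), $\sigma_{k+1}\in[\sigma_k,\gamma_1\sigma_k]$ if $\eta_1\le\rho_k<\eta_2$, $\sigma_{k+1}\in[\gamma_1\sigma_k,\gamma_2\sigma_k]$ if $\rho_k<\eta_1$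 (unsuccessful). $\mathcal S=\{k:\rho_k\ge\eta_1\}$ (successful iterations), $\mathcal S_k=\{i\in\mathcal S:i\le k\}$, $\mathcal U=\mathbb N\setminus\mathcal S$, $\mathcal U_k=\{i\in\mathcal U:i\le k\}$. *)

(* Defs.v *)
From HB Require Import structures.
From mathcomp Require Import all_boot all_order all_algebra.
From mathcomp Require Import all_classical all_reals all_analysis.
Set Implicit Arguments. Unset Strict Implicit. Unset Printing Implicit Defensive.
Import Order.TTheory GRing.Theory Num.Theory.
Import numFieldNormedType.Exports.
Local Open Scope classical_set_scope.
Local Open Scope ring_scope.

Section R2N.
Variables (R : realType) (n : nat).
Notation vec := 'cV[R]_n.

Definition enorm (v : vec) : R := Num.sqrt (\sum_(i < n) v i 0 ^+ 2).

Definition dotp (u v : vec) : R := \sum_(i < n) u i 0 * v i 0.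

Definition specnorm (A : 'M[R]_n) : R :=
  sup [set enorm (A *m v) | v in [set v : vec | enorm v <= 1]].

Definition grad (f : vec -> R) (x : vec) : vec :=
  \col_(i < n) 'D_(delta_mx i 0 : vec) f x.

Definition C1 (f : vec -> R) : Prop :=
  (forall x, differentiable f x) /\ continuous (grad f).

Definition proper_fun (g : vec -> \bar R) : Prop :=
  (forall x, g x != -oo%E) /\ (exists x, g x != +oo%E).

Definition prox_bounded (g : vec -> \bar R) : Prop :=
  exists nu : R, 0 < nu /\ exists x : vec,
    (-oo < ereal_inf [set (g y + (enorm (y - x) ^+ 2 / (2 * nu))%R%:E)%E | y in [set: vec]])%E.

(* Frechet (regular) subdifferential, epsilon-delta form of
   liminf_{y -> x, y <> x} (g y - g x - v^T (y - x)) / ||y - x|| >= 0 *)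
Definition frechet_subgrad (g : vec -> \bar R) (x v : vec) : Prop :=
  g x \is a fin_num /\
  forall eps : R, 0 < eps -> exists2 delta : R, 0 < delta &
    forall y : vec, enorm (y - x) < delta ->
      (g x + (dotp v (y - x) - eps * enorm (y - x))%R%:E <= g y)%E.

Definition limiting_subgrad (g : vec -> \bar R) (x v : vec) : Prop :=
  g x \is a fin_num /\
  exists (xs vs : nat -> vec),
    (forall k, frechet_subgrad g (xs k) (vs k)) /\
    (forall eps : R, 0 < eps -> exists N : nat, forall k, (N <= k)%N ->
       [/\ enorm (xs k - x) < eps,
           `| fine (g (xs k)) - fine (g x) | < eps &
           enorm (vs k - v) < eps]).

(* Assumption (MA1) on the model psi : x -> (s -> psi(s; x)) *)
Definition MA1 (h : vec -> \bar R) (psi : vec -> vec -> \bar R) : Prop :=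
  forall x : vec,
    [/\ proper_fun (psi x), lower_semicontinuous (psi x), prox_bounded (psi x),
        psi x 0 = h x &
        forall v, limiting_subgrad (psi x) 0 v <-> limiting_subgrad h x v].

Definition phi (f : vec -> R) (B : vec -> 'M[R]_n) (x s : vec) : R :=
  f x + dotp (grad f x) s + 2^-1 * dotp s (B x *m s).
Definition mmodel f B (psi : vec -> vec -> \bar R) (x : vec) (sigma : R) (s : vec) : \bar R :=
  ((phi f B x s + 2^-1 * sigma * enorm s ^+ 2)%R%:E + psi x s)%E.
Definition phi_cp (f : vec -> R) (x s : vec) : R := f x + dotp (grad f x) s.
(* m_cp(s; x, nuinv) where nuinv stands for nu^{-1} *)
Definition mcp f (psi : vec -> vec -> \bar R) (x : vec) (nuinv : R) (s : vec) : \bar R :=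
  ((phi_cp f x s + 2^-1 * nuinv * enorm s ^+ 2)%R%:E + psi x s)%E.
(* xi_cp(x, nu^{-1}) computed with the chosen s_cp *)
Definition xi_cp f (h : vec -> \bar R) (psi : vec -> vec -> \bar R) (x scp : vec) : \bar R :=
  ((f x)%:E + h x - ((phi_cp f x scp)%:E + psi x scp))%E.

(* extended division with the conventions  (+-oo) * 0 = 0  and  (+-oo)/(+-oo) = 0
   (a / b := a * b^{-1}, b^{-1} := 0 for b = +-oo, and r/0 = r * 0^-1 = 0 as in MathComp) *)
Definition ediv (a b : \bar R) : \bar R :=
  match b with
  | r%:E => (a * (r^-1)%R%:E)%E
  | _ => 0%E
  end.

Definition rho f B (h : vec -> \bar R) (psi : vec -> vec -> \bar R) (x s : vec) : \bar R :=
  ediv ((f x)%:E + h x - ((f (x + s)%R)%:E + h (x + s)%R))%E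
       ((phi f B x 0%R)%:E + psi x 0%R - (phi f B x s)%:E - psi x s)%E.

(* A run of Algorithm R2N: iterates x, regularization parameters sigma,
   Cauchy steps scp, trial steps st (before the possible reset) and steps s. *)
Definition R2N_run (f : vec -> R) (h : vec -> \bar R) (B : vec -> 'M[R]_n)
    (psi : vec -> vec -> \bar R)
    (theta1 theta2 eta1 eta2 gamma1 gamma2 gamma3 : R)
    (x : nat -> vec) (sigma : nat -> R) (scp st s : nat -> vec) : Prop :=
  (0 < theta1 < 1) /\ (1 < theta2) /\ (0 < eta1 <= eta2) /\ (eta2 < 1) /\
  (0 < gamma3 <= 1) /\ (1 < gamma1 <= gamma2) /\
  [/\ (h (x 0%N) < +oo)%E, 0 < sigma 0%N &
  forall k : nat,
    let nuk := theta1 / (specnorm (B (x k)) + sigma k) in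
    let rhok := rho f B h psi (x k) (s k) in
    [/\
        (forall t, (mcp f psi (x k) nuk^-1 (scp k) <= mcp f psi (x k) nuk^-1 t)%E),
        (mmodel f B psi (x k) (sigma k) (st k) <= mmodel f B psi (x k) (sigma k) (scp k))%E,
        s k = (if enorm (st k) > theta2 * enorm (scp k) then scp k else st k),
        x k.+1 = (if (eta1%:E <= rhok)%E then x k + s k else x k) &
        (if (eta2%:E <= rhok)%E then gamma3 * sigma k <= sigma k.+1 <= sigma k
         else if (eta1%:E <= rhok)%E then sigma k <= sigma k.+1 <= gamma1 * sigma k
         else gamma1 * sigma k <= sigma k.+1 <= gamma2 * sigma k)]].

End R2N.

(* Main.v *)
Require Import Defs.
From HB Require Import structures.
From mathcomp Require Import all_boot all_order all_algebra.
From mathcomp Require Import all_classical all_reals all_analysis.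
From mathcomp Require Import ring lra.
Import Order.TTheory GRing.Theory Num.Theory.
Import numFieldNormedType.Exports.
Local Open Scope classical_set_scope.
Local Open Scope ring_scope.

Section Aux.
Variables (R : realType) (n : nat).
Notation vec := 'cV[R]_n.

Definition L1 (v : vec) : R := \sum_(i < n) `|v i 0|.

Lemma sumsq_ge0 (v : vec) : 0 <= \sum_(i < n) v i 0 ^+ 2.
Proof. by apply: sumr_ge0 => i _; rewrite sqr_ge0. Qed.

Lemma enorm_ge0 (v : vec) : 0 <= enorm v.
Proof. exact: sqrtr_ge0. Qed.

Lemma enorm_sqr (v : vec) : enorm v ^+ 2 = \sum_(i < n) v i 0 ^+ 2.
Proof. by rewrite /enorm sqr_sqrtr // sumsq_ge0. Qed.

Lemma enorm0 : enorm (0 : vec) = 0.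
Proof. by rewrite /enorm big1 ?sqrtr0 // => i _; rewrite mxE expr0n. Qed.

Lemma dotp0r (u : vec) : dotp u 0 = 0.
Proof. by rewrite /dotp big1 // => i _; rewrite mxE mulr0. Qed.

Lemma coord_le (v : vec) i : `|v i 0| <= enorm v.
Proof.
rewrite -(sqrtr_sqr (v i 0)) /enorm ler_sqrt ?sumsq_ge0 //.
rewrite (bigD1 i) //= lerDl; apply: sumr_ge0 => j _; exact: sqr_ge0.
Qed.

Lemma coord_leL1 (v : vec) i : `|v i 0| <= L1 v.
Proof.
rewrite /L1 (bigD1 i) //= lerDl; apply: sumr_ge0 => j _; exact: normr_ge0.
Qed.

Lemma L1_ge0 (v : vec) : 0 <= L1 v.
Proof. by apply: sumr_ge0 => j _; exact: normr_ge0. Qed.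

Lemma enorm_leL1 (v : vec) : enorm v <= L1 v.
Proof.
rewrite -(ger0_norm (L1_ge0 v)) -sqrtr_sqr /enorm ler_sqrt ?sqr_ge0 //.
rewrite expr2 {2}/L1 mulr_sumr; apply: ler_sum => i _.
rewrite -real_normK ?num_real // expr2; apply: ler_wpM2r => //; exact: coord_leL1.
Qed.

Lemma L1_le_enorm (v : vec) : L1 v <= n%:R * enorm v.
Proof.
have -> : n%:R * enorm v = \sum_(i < n) enorm v by rewrite sumr_const card_ord mulr_natl.
rewrite /L1.
by apply: ler_sum => i _; rewrite coord_le.
Qed.

Lemma L1D (u v : vec) : L1 (u + v) <= L1 u + L1 v.
Proof.
rewrite /L1 -big_split /=; apply: ler_sum => i _; rewrite mxE; exact: ler_normD.
Qed.

Lemma L1N (u v : vec) : L1 (u - v) = L1 (v - u).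
Proof. by rewrite -opprB /L1; apply: eq_bigr => i _; rewrite mxE normrN. Qed.

Lemma enorm_eq0 (v : vec) : enorm v = 0 -> v = 0.
Proof.
move=> h; apply/matrixP => i j; rewrite (ord1 j) mxE.
by apply/normr0_eq0/eqP; rewrite eq_le normr_ge0 andbT -h coord_le.
Qed.

Lemma enormZ (c : R) (v : vec) : enorm (c *: v) = `|c| * enorm v.
Proof.
rewrite /enorm -sqrtr_sqr -sqrtrM ?sqr_ge0 //; congr Num.sqrt.
by rewrite mulr_sumr; apply: eq_bigr => i _; rewrite mxE exprMn.
Qed.

Lemma dotp_am (u w : vec) (t : R) : 0 < t ->
  2 * dotp u w <= t * enorm u ^+ 2 + t^-1 * enorm w ^+ 2.
Proof.
move=> t0.
have H : 0 <= \sum_(i < n) (t * u i 0 - w i 0) ^+ 2.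
  by apply: sumr_ge0 => i _; exact: sqr_ge0.
have E : \sum_(i < n) (t * u i 0 - w i 0) ^+ 2 =
   t ^+ 2 * enorm u ^+ 2 - 2 * t * dotp u w + enorm w ^+ 2.
  rewrite !enorm_sqr /dotp mulr_sumr mulr_sumr -sumrB -big_split /=.
  by apply: eq_bigr => i _; ring.
rewrite E in H.
have : 2 * t * dotp u w <= t ^+ 2 * enorm u ^+ 2 + enorm w ^+ 2 by lra.
move=> H2.
rewrite -(ler_pM2l t0) mulrDr [t * (t^-1 * _)]mulrA divff ?gt_eqF // mul1r.
have -> : t * (t * enorm u ^+ 2) = t ^+ 2 * enorm u ^+ 2 by rewrite expr2 mulrA.
have -> : t * (2 * dotp u w) = 2 * t * dotp u w by ring.
exact: H2.
Qed.


Lemma spec_ub (A : 'M[R]_n) :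
  has_ubound [set enorm (A *m v) | v in [set v : vec | enorm v <= 1]].
Proof.
exists (\sum_(i < n) \sum_(j < n) `|A i j|) => _ [v /= v1 <-].
apply: (le_trans (enorm_leL1 _)); apply: ler_sum => i _.
rewrite mxE; apply: (le_trans (ler_norm_sum _ _ _)); apply: ler_sum => j _.
rewrite normrM -[X in _ <= X]mulr1; apply: ler_wpM2l => //.
exact: le_trans (coord_le _ _) v1.
Qed.

Lemma spec_ge0 (A : 'M[R]_n) : 0 <= specnorm A.
Proof.
apply: ub_le_sup; first exact: spec_ub.
exists 0; first by rewrite /= enorm0 ler01.
by rewrite mulmx0 enorm0.
Qed.

Lemma spec_bound (A : 'M[R]_n) (v : vec) :
  enorm (A *m v) <= specnorm A * enorm v.
Proof.
have [e0|en0] := eqVneq (enorm v) 0.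
  by rewrite e0 (enorm_eq0 _ e0) mulmx0 enorm0 mulr0.
have ep : 0 < enorm v by rewrite lt_neqAle eq_sym en0 enorm_ge0.
have : enorm (A *m ((enorm v)^-1 *: v)) <= specnorm A.
  apply: ub_le_sup; first exact: spec_ub.
  exists ((enorm v)^-1 *: v) => //=.
  by rewrite enormZ ger0_norm ?invr_ge0 ?enorm_ge0 // mulVf.
rewrite -scalemxAr enormZ ger0_norm ?invr_ge0 ?enorm_ge0 //.
by rewrite mulrC -ler_pdivrMr ?invr_gt0 // invrK.
Qed.

Lemma quad_bound (A : 'M[R]_n) (s : vec) :
  dotp s (A *m s) <= specnorm A * enorm s ^+ 2.
Proof.
have [K0|Kp] := eqVneq (specnorm A) 0.
  have Z : A *m s = 0.
    apply: enorm_eq0; apply/eqP; rewrite eq_le enorm_ge0 andbT.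
    by rewrite -(mulr0 (enorm s)) mulrC -K0 spec_bound.
  by rewrite Z dotp0r K0 mul0r.
have Kp' : 0 < specnorm A by rewrite lt_neqAle eq_sym Kp spec_ge0.
have H := dotp_am s (A *m s) (specnorm A) Kp'.
have H2 : enorm (A *m s) ^+ 2 <= (specnorm A * enorm s) ^+ 2.
  by rewrite ler_sqr ?nnegrE ?enorm_ge0 ?mulr_ge0 ?spec_ge0 ?enorm_ge0 ?spec_bound.
have H3 : (specnorm A)^-1 * enorm (A *m s) ^+ 2 <= specnorm A * enorm s ^+ 2.
  rewrite -(ler_pM2l Kp') mulrA divff ?gt_eqF // mul1r.
  by rewrite mulrA -expr2 -exprMn.
lra.
Qed.

End Aux.
Arguments L1 {R n}.
Arguments sumsq_ge0 {R n}. Arguments enorm_ge0 {R n}. Arguments enorm_sqr {R n}.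
Arguments enorm0 {R n}. Arguments dotp0r {R n}. Arguments coord_le {R n}.
Arguments coord_leL1 {R n}. Arguments L1_ge0 {R n}. Arguments enorm_leL1 {R n}.
Arguments L1_le_enorm {R n}. Arguments L1D {R n}. Arguments L1N {R n}.
Arguments enorm_eq0 {R n}. Arguments enormZ {R n}. Arguments dotp_am {R n}.
Arguments spec_ub {R n}. Arguments spec_ge0 {R n}. Arguments spec_bound {R n}.
Arguments quad_bound {R n}.
Lemma step (R : realType) (n : nat)
  (f : 'cV[R]_n -> R) (h : 'cV[R]_n -> \bar R) (B : 'cV[R]_n -> 'M[R]_n)
  (psi : 'cV[R]_n -> 'cV[R]_n -> \bar R) (x0 : 'cV[R]_n)
  (sig th1 th2 eta1 alpha : R) (scp st s : 'cV[R]_n) :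
  0 < th1 < 1 -> 1 < th2 -> 0 < eta1 -> 0 < alpha -> 0 < sig ->
  (forall y, h y != -oo%E) -> (forall t, psi x0 t != -oo%E) -> psi x0 0 = h x0 ->
  h x0 \is a fin_num ->
  let nuk := th1 / (specnorm (B x0) + sig) in
  (forall t, mcp f psi x0 nuk^-1 scp <= mcp f psi x0 nuk^-1 t)%E ->
  (mmodel f B psi x0 sig st <= mmodel f B psi x0 sig scp)%E ->
  s = (if enorm st > th2 * enorm scp then scp else st) ->
  (alpha%:E <= (Num.sqrt (nuk^-1))%:E * sqrte (xi_cp f h psi x0 scp))%E ->
  (eta1%:E <= rho f B h psi x0 s)%E ->
  h (x0 + s) \is a fin_num /\
  alpha * eta1 * (1 - th1) / (2 * th2) * enorm s <=
    (f x0 + fine (h x0)) - (f (x0 + s) + fine (h (x0 + s))).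
Proof.
move=> /andP[th1p th1l] th2g eta1p alp sigp hprop psiprop psi0 hfin nuk Hopt Hmm Hs Ha Hrho.
have K0 := spec_ge0 (B x0).
have Kq := quad_bound (B x0).
move: Kq K0 Ha Hopt Hrho; rewrite /nuk; move: (specnorm (B x0)) => K Kq K0 Ha Hopt Hrho.
have ap : 0 < K + sig by lra.
have adef : (th1 / (K + sig))^-1 = (K + sig) / th1 by rewrite invf_div.
rewrite adef in Ha Hopt.
have [a [aE ap']] : exists a, a = (K + sig) / th1 /\ 0 < a.
  by exists ((K + sig) / th1); split => //; rewrite divr_gt0.
rewrite -aE in Ha Hopt.
have ath : th1 * a = K + sig by rewrite aE mulrC divfK ?gt_eqF.
have Hsn : enorm s <= th2 * enorm scp.
  rewrite Hs; case: ifP => [_|/negbT]; last by rewrite -leNgt.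
  by rewrite ler_peMl ?enorm_ge0 // ltW.
have Hms : (mmodel f B psi x0 sig s <= mmodel f B psi x0 sig scp)%E.
  by rewrite Hs; case: ifP.
move: hfin; case E: (h x0) => [H| |] // _.
have H0 := Hopt 0.
rewrite /mcp /phi_cp dotp0r enorm0 psi0 E expr0n /= mulr0 !addr0 in H0.
move: H0 Ha; rewrite /xi_cp E.
case P: (psi x0 scp) => [P'| |]; last by have := psiprop scp; rewrite P.
  2: by rewrite /= leye_eq.
move=> H0 Ha.
rewrite -!EFinD lee_fin in H0.
rewrite /phi_cp -!EFinD /= -EFinM lee_fin in Ha.
move: Hms; rewrite /mmodel P.
case Q: (psi x0 s) => [Q'| |]; last by have := psiprop s; rewrite Q.
  2: by rewrite /= leye_eq.
rewrite -!EFinD lee_fin => Hms.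
have phi0 : phi f B x0 0 = f x0 by rewrite /phi dotp0r mulmx0 dotp0r !mulr0 !addr0.
move: Hrho; rewrite /rho /ediv psi0 E Q phi0 -!EFinD /=.
have [xi xiE] : exists xi, xi = f x0 + H - (f x0 + dotp (grad f x0) scp + P') by eexists.
have [d dE] : exists d, d = f x0 + H - phi f B x0 s - Q' by eexists.
rewrite -xiE in Ha; rewrite -dE.
have phiscp : phi f B x0 scp = f x0 + dotp (grad f x0) scp + 2^-1 * dotp scp (B x0 *m scp) by [].
have KqS := Kq scp.
have aN : th1 * (a * enorm scp ^+ 2) = K * enorm scp ^+ 2 + sig * enorm scp ^+ 2.
  by rewrite mulrA ath mulrDl.
have xi1 : a * enorm scp ^+ 2 <= 2 * xi by lra.
have xi2 : th1 * (a * enorm scp ^+ 2) <= th1 * (2 * xi) by apply: ler_wpM2l => //; lra.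
have sM : 0 <= sig * enorm s ^+ 2 by rewrite mulr_ge0 ?sqr_ge0 // ltW.
have dge : (1 - th1) * xi <= d by lra.
have xip : 0 < xi.
  rewrite ltNge; apply/negP => xle; move: Ha; rewrite (ler0_sqrtr xle) mulr0.
  by rewrite leNgt alp.
have a2 : alpha ^+ 2 <= a * xi.
  have : alpha ^+ 2 <= (Num.sqrt a * Num.sqrt xi) ^+ 2.
    by rewrite ler_sqr ?nnegrE ?mulr_ge0 ?sqrtr_ge0 ?(ltW alp).
  by rewrite exprMn !sqr_sqrtr ?(ltW ap') ?(ltW xip).
have N0 : 0 <= enorm scp ^+ 2 by rewrite sqr_ge0.
have es : alpha * enorm scp <= 2 * xi.
  have P1 : alpha ^+ 2 * enorm scp ^+ 2 <= (a * xi) * enorm scp ^+ 2 by rewrite ler_wpM2r.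
  have P2 : xi * (a * enorm scp ^+ 2) <= xi * (2 * xi) by apply: ler_wpM2l => //; lra.
  have x2 : 0 <= xi ^+ 2 by rewrite sqr_ge0.
  have : (alpha * enorm scp) ^+ 2 <= (2 * xi) ^+ 2.
    rewrite exprMn; lra.
  rewrite ler_sqr ?nnegrE ?mulr_ge0 ?enorm_ge0 //; lra.
have ss : alpha * enorm s <= th2 * (2 * xi).
  have S1 : alpha * enorm s <= alpha * (th2 * enorm scp) by apply: ler_wpM2l => //; lra.
  have S2 : th2 * (alpha * enorm scp) <= th2 * (2 * xi) by apply: ler_wpM2l => //; lra.
  lra.
have dpos : 0 < d by apply: (lt_le_trans _ dge); rewrite mulr_gt0 // subr_gt0.
case E' : (h (x0 + s)) => [H'| |]; last by have := hprop (x0 + s); rewrite E'.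
  2: by rewrite /= mulNyr gtr0_sg ?invr_gt0 // mul1e leeNy_eq.
rewrite -!EFinD -EFinM lee_fin ler_pdivlMr // => Hr.
split => //=.
have th2p : 0 < th2 by lra.
rewrite -(ler_pM2l (_ : 0 < 2 * th2)) ?mulr_gt0 //.
have -> : 2 * th2 * (alpha * eta1 * (1 - th1) / (2 * th2) * enorm s) =
   eta1 * (1 - th1) * (alpha * enorm s).
  by field; lra.
have Q1 : eta1 * (1 - th1) * (alpha * enorm s) <= eta1 * (1 - th1) * (th2 * (2 * xi)).
  by rewrite ler_wpM2l // mulr_ge0 ?subr_ge0 ?ltW.
have Q2 : th2 * (eta1 * ((1 - th1) * xi)) <= th2 * (eta1 * d).
  by apply: ler_wpM2l; [lra | apply: ler_wpM2l => //; lra].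
have Q3 : th2 * (eta1 * d) <= th2 * (f x0 + H - (f (x0 + s) + H')).
  by apply: ler_wpM2l => //; lra.
lra.
Qed.
Lemma real_cauchy0 (R : realType) (u : nat -> R) :
  (forall e : R, 0 < e -> exists N : nat, forall p q : nat, (N <= p)%N -> (N <= q)%N -> `|u p - u q| < e) ->
  exists l : R, forall e : R, 0 < e -> exists N : nat, forall k : nat, (N <= k)%N -> `|u k - l| < e.
Proof.
move=> H.
have cu : cvg (u @ \oo).
  apply: cauchy_cvg; apply: cauchy_exP => e e0.
  have [N HN] := H e e0.
  exists (u N); exists N => // k /= Nk.
  rewrite /ball /=. exact: HN.
exists (lim (u @ \oo)) => e e0.
have /cvgrPdistC_lt /(_ e e0) [N _ HN] := cu.
by exists N => k Nk; apply: HN.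
Qed.

Theorem lemma5p2 (R : realType) (n : nat)
  (f : 'cV[R]_n -> R) (h : 'cV[R]_n -> \bar R) (B : 'cV[R]_n -> 'M[R]_n)
  (psi : 'cV[R]_n -> 'cV[R]_n -> \bar R)
  (theta1 theta2 eta1 eta2 gamma1 gamma2 gamma3 : R)
  (x : nat -> 'cV[R]_n) (sigma : nat -> R) (scp st s : nat -> 'cV[R]_n)
  (fh_low alpha : R) :
  C1 f -> proper_fun h -> lower_semicontinuous h ->
  (forall y, (B y)^T = B y) ->
  MA1 h psi ->
  R2N_run f h B psi theta1 theta2 eta1 eta2 gamma1 gamma2 gamma3 x sigma scp st s ->
  (* infinitely many successful iterations *)
  (forall N : nat, exists2 k : nat, (N <= k)%N &
     (eta1%:E <= rho f B h psi (x k) (s k))%E) ->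
  (forall k, (fh_low%:E <= (f (x k))%:E + h (x k))%E) ->
  0 < alpha ->
  (forall k : nat,
     let nuk := theta1 / (specnorm (B (x k)) + sigma k) in
     (alpha%:E <= (Num.sqrt (nuk^-1))%:E * sqrte (xi_cp f h psi (x k) (scp k)))%E) ->
  (* {x_k} is Cauchy (Euclidean norm) and converges *)
  (forall eps : R, 0 < eps -> exists N : nat, forall p q : nat,
      (N <= p)%N -> (N <= q)%N -> enorm (x p - x q) < eps) /\
  (exists xstar : 'cV[R]_n, forall eps : R, 0 < eps ->
      exists N : nat, forall k : nat, (N <= k)%N -> enorm (x k - xstar) < eps).
Proof.
pose STEP := @step R n f h B psi.
move=> _ [hprop _] _ _ HMA Hrun _ Hlow alp Halpha.
case: Hrun => th1 [th2g [/andP[eta1p eta12] [eta2l [/andP[g3p g31] [/andP[g1 g12] [hx0 sig0 Hk]]]]]].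
have inv : forall k, h (x k) \is a fin_num /\ 0 < sigma k.
  elim => [|k [hk sk]].
    by split => //; rewrite fin_numE hprop /= (lt_eqF hx0).
  case: (Hk k) => Hopt Hmm Hs Hx Hsig.
  case: (HMA (x k)) => [[pp _] _ _ psi0 _].
  split.
    rewrite Hx; case: ifP => hr //.
    exact: (STEP _ _ _ _ _ _ _ _ _ th1 th2g eta1p alp sk hprop pp psi0 hk Hopt Hmm Hs (Halpha k) hr).1.
  move: Hsig; case: ifP => _.
    by move=> /andP[le1 _]; apply: lt_le_trans le1; rewrite mulr_gt0.
  case: ifP => _ /andP[le1 _]; apply: lt_le_trans le1 => //.
  by rewrite mulr_gt0 //; lra.
pose F k := f (x k) + fine (h (x k)).
pose C := alpha * eta1 * (1 - theta1) / (2 * theta2).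
have Cp : 0 < C.
  case/andP: th1 => t1 t2.
  by rewrite /C !mulr_gt0 ?invr_gt0 // ?subr_gt0 //; lra.
have dec : forall k, C * enorm (x k.+1 - x k) <= F k - F k.+1.
  move=> k; case: (inv k) => hk sk.
  case: (Hk k) => Hopt Hmm Hs Hx Hsig.
  case: (HMA (x k)) => [[pp _] _ _ psi0 _].
  rewrite /F Hx; case: ifP => hr.
    have := (STEP _ _ _ _ _ _ _ _ _ th1 th2g eta1p alp sk hprop pp psi0 hk Hopt Hmm Hs (Halpha k) hr).2.
    by rewrite [x k + s k - x k]addrAC subrr add0r.
  by rewrite !subrr enorm0 mulr0.
have Fdec : forall k, F k.+1 <= F k.
  move=> k; have := dec k; have := enorm_ge0 (x k.+1 - x k).
  have := Cp; move: (C) => c cp eg dk.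
  have : 0 <= c * enorm (x k.+1 - x k) by rewrite mulr_ge0 // ltW.
  lra.
have Fmono : nonincreasing_seq F by apply/nonincreasing_seqP.
have Flb : has_lbound (range F).
  exists fh_low => _ [k _ <-]; have := Hlow k.
  by rewrite /F -{1}(fineK (inv k).1) -EFinD lee_fin.
have FC := nonincreasing_cvgn Fmono Flb.
move: FC; set l := inf _ => FC.
have L10 : L1 (0 : 'cV[R]_n) = 0 by rewrite /L1 big1 // => i _; rewrite mxE normr0.
have tel : forall p m, C * L1 (x (m + p)%N - x p) <= n%:R * (F p - F (m + p)%N).
  move=> p; elim => [|m IH].
    by rewrite add0n !subrr L10 mulr0.
  rewrite addSn.
  have E1 : x (m + p).+1 - x p = (x (m + p).+1 - x (m + p)%N) + (x (m + p)%N - x p).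
    by rewrite addrA subrK.
  rewrite E1.
  have hC : C * L1 (x (m + p).+1 - x (m + p)%N + (x (m + p)%N - x p)) <=
     C * L1 (x (m + p).+1 - x (m + p)%N) + C * L1 (x (m + p)%N - x p).
    by rewrite -mulrDr; apply: ler_wpM2l; [exact: ltW | exact: L1D].
  have s1 : C * L1 (x (m + p).+1 - x (m + p)%N) <= C * (n%:R * enorm (x (m + p).+1 - x (m + p)%N)).
    by apply: ler_wpM2l; [exact: ltW | exact: L1_le_enorm].
  have s2 : n%:R * (C * enorm (x (m + p).+1 - x (m + p)%N)) <= n%:R * (F (m + p)%N - F (m + p).+1).
    by apply: ler_wpM2l; [exact: ler0n | exact: dec].
  lra.
have cauch : forall eps : R, 0 < eps -> exists N : nat, forall p q : nat,
      (N <= p)%N -> (N <= q)%N -> enorm (x p - x q) < eps.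
  move=> eps ep.
  have np1 : (0:R) < n%:R + 1 by rewrite natr1 ltr0Sn.
  have e'p : 0 < eps * C / (2 * (n%:R + 1)) by apply: divr_gt0; apply: mulr_gt0 => //; lra.
  have /cvgrPdist_lt /(_ _ e'p) [N _ HN] := FC.
  exists N.
  suff key : forall p q, (N <= p)%N -> (p <= q)%N -> L1 (x q - x p) < eps.
    move=> p q Np Nq; apply: le_lt_trans (enorm_leL1 _) _.
    case/orP: (leq_total p q) => pq.
      by rewrite L1N; apply: key.
    by apply: key => //; apply: leq_trans pq.
  move=> p q Np pq.
  have Nq := leq_trans Np pq.
  have T := tel p (q - p)%N; rewrite subnK // in T.
  have H1 := HN p Np; have H2 := HN q Nq.
  rewrite -(ltr_pM2l Cp).
  have D : F p - F q < 2 * (eps * C / (2 * (n%:R + 1))).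
    move: H1 H2; rewrite !ltr_distl; lra.
  have n0 : 0 <= n%:R :> R by exact: ler0n.
  have D2 : n%:R * (F p - F q) <= n%:R * (2 * (eps * C / (2 * (n%:R + 1)))).
    by apply: ler_wpM2l => //; exact: ltW.
  have D3 : n%:R * (2 * (eps * C / (2 * (n%:R + 1)))) < C * eps.
    have -> : n%:R * (2 * (eps * C / (2 * (n%:R + 1)))) = (C * eps) * (n%:R / (n%:R + 1)).
      by field; lra.
    rewrite gtr_pMr; last exact: mulr_gt0.
    have -> : n%:R / (n%:R + 1) = 1 - (n%:R + 1)^-1 :> R by field; lra.
    have : 0 < (n%:R + 1 : R)^-1 by rewrite invr_gt0.
    lra.
  lra.
split => //.
have coord : forall i : 'I_n, exists li : R, forall e, 0 < e ->
    exists N : nat, forall k : nat, (N <= k)%N -> `|x k i 0 - li| < e.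
  move=> i; apply: real_cauchy0 => e ep; have [N HN] := cauch e ep; exists N => p q Np Nq.
  have := coord_le (x p - x q) i; rewrite !mxE => /le_lt_trans; apply; exact: HN.
have [lf Hl] := choice coord.
exists (\col_i lf i) => eps ep.
have np1 : (0:R) < n%:R + 1 by have := @ler0n R n; lra.
have e'p : 0 < eps / (n%:R + 1) by apply: divr_gt0.
have NN : forall i : 'I_n, exists N : nat, forall k : nat, (N <= k)%N ->
    `|x k i 0 - lf i| < eps / (n%:R + 1) := fun i => Hl i _ e'p.
have [Nf HN] := choice NN.
exists (\max_(i < n) Nf i)%N => k Nk.
apply: le_lt_trans (enorm_leL1 _) _.
have : L1 (x k - \col_i lf i) <= \sum_(i < n) (eps / (n%:R + 1)).
  apply: ler_sum => i _; rewrite !mxE; apply/ltW/HN.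
  by apply: leq_trans Nk; apply: (@leq_bigmax _ (fun j => Nf j) i).
rewrite sumr_const card_ord => H.
apply: le_lt_trans H _; rewrite -[_ *+ n]mulr_natl.
have -> : n%:R * (eps / (n%:R + 1)) = eps * (1 - (n%:R + 1)^-1) by field; lra.
have : 0 < (n%:R + 1 : R)^-1 by rewrite invr_gt0.
have : 0 < eps * (n%:R + 1 : R)^-1 by apply: mulr_gt0.
lra.
Qed.
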